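(* Let $n$ be odd and let $L=\bigoplus_{i\in\mathbb{Z}/n\mathbb{Z}}L_i$ be a $(\mathbb{Z}/n\mathbb{Z})$-graded Lie algebra over a field with $L_0=0$ such that $$\big[[x_{d_1},x_{d_2}],[x_{d_3},x]\big]=0$$ for all $x_{d_i}\in L_{d_i}$ and all $x\in L$ whenever $(d_1,d_2,d_3)$ is $(-1)$-independent. Then $L$ is metabelian, i.e. $[[L,L],[L,L]]=0$.
   Context: A $(\mathbb{Z}/n\mathbb{Z})$-graded Lie algebra is $L=\bigoplus_{i=0}^{n-1}L_i$ with $[L_i,L_j]\subseteq L_{i+j \bmod n}$. A sequence $(a_1,\dots,a_k)$ in $\mathbb{Z}/n\mathbb{Z}$ is $(-1)$-dependent if $t_1a_1+\dots+t_ka_k=0$ for some $t_i\in\{0,1\}$ not all zero, and $(-1)$-independent otherwise. *)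

(* Defs.v *)
From HB Require Import structures.
From mathcomp Require Import all_boot all_order all_algebra.
Set Implicit Arguments. Unset Strict Implicit. Unset Printing Implicit Defensive.
Import GRing.Theory.
Local Open Scope ring_scope.

Definition is_lie_bracket (K : fieldType) (L : lmodType K) (br : L -> L -> L) : Prop :=
  [/\ (forall (a : K) (x y z : L), br (a *: x + y) z = a *: br x z + br y z),
      (forall (a : K) (x y z : L), br z (a *: x + y) = a *: br z x + br z y),
      (forall x : L, br x x = 0) &
      (forall x y z : L, br x (br y z) + br y (br z x) + br z (br x y) = 0)].

Definition is_subspace (K : fieldType) (L : lmodType K) (V : L -> Prop) : Prop :=
  V 0 /\ (forall (a : K) (u v : L), V u -> V v -> V (a *: u + v)).

(* (Z/mZ)-grading L = (+)_{i in Z/mZ} L_i of the Lie algebra (L, br); the index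
   set Z/mZ is represented by 'I_m with m = n.+1 (its canonical zmodType). *)
Definition is_lie_grading (K : fieldType) (L : lmodType K) (n : nat)
    (br : L -> L -> L) (Lg : 'I_n.+1 -> L -> Prop) : Prop :=
  [/\ (forall i, is_subspace (Lg i)),
      (forall x : L, exists f : 'I_n.+1 -> L,
          (forall i, Lg i (f i)) /\ x = \sum_(i < n.+1) f i),
      (forall f : 'I_n.+1 -> L, (forall i, Lg i (f i)) ->
          \sum_(i < n.+1) f i = 0 -> forall i, f i = 0) &
      (forall (i j : 'I_n.+1) (x y : L), Lg i x -> Lg j y -> Lg (i + j) (br x y))].

(* (-1)-dependence of a finite sequence in Z/mZ: some nonempty subfamily
   (t_i in {0,1}, not all zero) sums to 0. *)
Definition minus1_dependent (n : nat) (s : seq 'I_n.+1) : Prop :=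
  exists t : bitseq, [/\ size t = size s, has id t & \sum_(a <- mask t s) a = 0].

Definition minus1_independent (n : nat) (s : seq 'I_n.+1) : Prop :=
  ~ minus1_dependent s.

Definition derived (K : fieldType) (L : lmodType K) (br : L -> L -> L) (x : L) : Prop :=
  exists s : seq (K * (L * L)), x = \sum_(p <- s) p.1 *: br p.2.1 p.2.2.

Definition metabelian (K : fieldType) (L : lmodType K) (br : L -> L -> L) : Prop :=
  forall u v : L, derived br u -> derived br v -> br u v = 0.

(* Main.v *)
Require Import Defs.
From HB Require Import structures.
From mathcomp Require Import all_boot all_order all_algebra.
From mathcomp Require Import zify.
Import GRing.Theory.

Definition I3 m x y z : bool := [&& ~~ (m %| x), ~~ (m %| y), ~~ (m %| z), ~~ (m %| x + y),
  ~~ (m %| x + z), ~~ (m %| y + z) & ~~ (m %| x + y + z)].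
Definition J m a b c d : bool := ((m %| a + b + c) || ((m %| b + c) && (m %| a + c))) &&
  ((m %| a + b + d) || ((m %| b + d) && (m %| a + d))).

Lemma two m x : odd m -> m %| x + x -> m %| x.
Proof. by move=> om; rewrite addnn -muln2 Gauss_dvdl // coprimen2. Qed.

Lemma key {m x} y u v : x + y = u + v -> m %| y -> m %| u -> m %| v -> m %| x.
Proof.
move=> E hy hu hv; have : m %| x + y by rewrite E dvdn_add.
by rewrite dvdn_addl.
Qed.

Ltac ceq := repeat match goal with H : is_true _ |- _ => clear H end; lia.
Ltac spl := repeat (apply/andP; split).

Lemma comb m a b c d : odd m -> ~~ (m %| a) -> ~~ (m %| b) -> ~~ (m %| c) -> ~~ (m %| d) ->
  ~~ (m %| a + b) -> ~~ (m %| c + d) -> ~~ (m %| a + b + c + d) ->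
  [|| I3 m a b c, I3 m a b d, I3 m c d a, I3 m c d b, J m a b c d | J m c d a b].
Proof.
move=> om na nb nc nd nab ncd ns.
case: (boolP (m %| a + b + c)) => e1.
  case: (boolP (m %| a + b + d)) => e2.
    by rewrite (_ : J m a b c d) ?orbT // /J e1 e2.
  case: (boolP (m %| a + d)) => e3.
    case: (boolP (m %| b + d)) => e4.
      by rewrite (_ : J m a b c d) ?orbT // /J e1 e3 e4 orbT.
    rewrite (_ : I3 m c d b) ?orbT // /I3; spl => //.
    - apply/negP => h; move/negP: na; apply; apply: (key (c + b) (a + b + c) 0) => //; ceq.
    - by rewrite addnC.
    - apply/negP => h; move/negP: na; apply; apply: two => //.
      by apply: (key (c + d + b) (a + b + c) (a + d)) => //; ceq.
  case: (boolP (m %| b + d)) => e4.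
    rewrite (_ : I3 m c d a) ?orbT // /I3; spl => //.
    - apply/negP => h; move/negP: nb; apply; apply: (key (c + a) (a + b + c) 0) => //; ceq.
    - by rewrite addnC.
    - apply/negP => h; move/negP: nb; apply; apply: two => //.
      by apply: (key (c + d + a) (a + b + c) (b + d)) => //; ceq.
  by rewrite (_ : I3 m a b d) ?orbT // /I3; spl.
case: (boolP (m %| a + c)) => e2.
  case: (boolP (m %| a + b + d)) => e3.
    case: (boolP (m %| b + c)) => e4.
      by rewrite (_ : J m a b c d) ?orbT // /J e3 e4 e2 !orbT.
    rewrite (_ : I3 m c d b) ?orbT // /I3; spl => //.
    - by rewrite addnC.
    - apply/negP => h; move/negP: na; apply; apply: (key (d + b) (a + b + d) 0) => //; ceq.
    - apply/negP => h; move/negP: na; apply; apply: two => //.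
      by apply: (key (c + d + b) (a + c) (a + b + d)) => //; ceq.
  case: (boolP (m %| a + d)) => e4.
    case: (boolP (m %| c + d + b)) => e5.
      rewrite (_ : J m c d a b) ?orbT // /J [d + a]addnC [c + a]addnC.
      by rewrite e4 e2 e5 !orbT.
    rewrite (_ : I3 m c d b) ?orbT // /I3; spl => //.
    - apply/negP => h; move/negP: ns; apply; apply: (key 0 (c + b) (a + d)) => //; ceq.
    - apply/negP => h; move/negP: ns; apply; apply: (key 0 (d + b) (a + c)) => //; ceq.
  case: (boolP (m %| b + d)) => e5.
    by move/negP: ns; case; apply: (key 0 (a + c) (b + d)) => //; ceq.
  by rewrite (_ : I3 m a b d) ?orbT // /I3; spl.
case: (boolP (m %| b + c)) => e3.
  case: (boolP (m %| a + b + d)) => e4.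
    rewrite (_ : I3 m c d a) ?orbT // /I3; spl => //.
    - by rewrite addnC.
    - apply/negP => h; move/negP: nb; apply; apply: (key (d + a) (a + b + d) 0) => //; ceq.
    - apply/negP => h; move/negP: nb; apply; apply: two => //.
      by apply: (key (c + d + a) (b + c) (a + b + d)) => //; ceq.
  case: (boolP (m %| b + d)) => e5.
    case: (boolP (m %| c + d + a)) => e6.
      rewrite (_ : J m c d a b) ?orbT // /J [d + b]addnC [c + b]addnC.
      by rewrite e5 e3 e6 !orbT.
    rewrite (_ : I3 m c d a) ?orbT // /I3; spl => //.
    - by rewrite addnC.
    - apply/negP => h; move/negP: ns; apply; apply: (key 0 (d + a) (b + c)) => //; ceq.
  case: (boolP (m %| a + d)) => e6.
    by move/negP: ns; case; apply: (key 0 (a + d) (b + c)) => //; ceq.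
  by rewrite (_ : I3 m a b d) ?orbT // /I3; spl.
by rewrite (_ : I3 m a b c) ?orbT // /I3; spl.
Qed.

Lemma o0 n (x : 'I_n.+1) : (x == 0%R) = (n.+1 %| x).
Proof. by rewrite -val_eqE /= /dvdn modn_small ?ltn_ord. Qed.

Lemma valD n (x y : 'I_n.+1) : val (x + y)%R = (val x + val y) %% n.+1.
Proof. by []. Qed.

Lemma d2 n (x y : 'I_n.+1) : (x + y == 0)%R = (n.+1 %| x + y).
Proof. by rewrite o0 valD /dvdn modn_mod. Qed.

Lemma d3 n (x y z : 'I_n.+1) : (x + y + z == 0)%R = (n.+1 %| x + y + z).
Proof. by rewrite o0 !valD /dvdn modn_mod modnDml. Qed.

Lemma d4 n (x y z w : 'I_n.+1) : (x + y + (z + w) == 0)%R = (n.+1 %| x + y + z + w).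
Proof. by rewrite o0 !valD /dvdn modn_mod modnDml modnDmr !addnA. Qed.

Lemma indep {n} {a b c : 'I_n.+1} : I3 n.+1 a b c -> minus1_independent [:: a; b; c].
Proof.
rewrite /I3 => /and3P [na nb /and3P [nc nab /and3P [nac nbc nabc]]].
move=> [t [st ht hs]].
case: t st ht hs => [|t1 [|t2 [|t3 [|]]]] //= _.
case: t1; case: t2; case: t3 => //= _; rewrite !big_cons big_nil /= ?GRing.addr0 ?GRing.addrA => /eqP;
  by rewrite ?d3 ?d2 ?o0 ?(negbTE na) ?(negbTE nb) ?(negbTE nc) ?(negbTE nab) ?(negbTE nac)
     ?(negbTE nbc) ?(negbTE nabc).
Qed.

Lemma Jc {n} {a b c d : 'I_n.+1} : J n.+1 a b c d ->
  ((a + b + c = 0 \/ (b + c = 0 /\ a + c = 0)) /\ (a + b + d = 0 \/ (b + d = 0 /\ a + d = 0)))%R.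
Proof.
rewrite /J -!d3 -!d2.
case/andP => /orP [/eqP h|/andP [/eqP h1 /eqP h2]] /orP [/eqP h'|/andP [/eqP h1' /eqP h2']];
  split; by [left | right].
Qed.

Local Open Scope ring_scope.

Theorem lemma3 (K : fieldType) (L : lmodType K) (n : nat)
    (br : L -> L -> L) (Lg : 'I_n.+1 -> L -> Prop) :
  odd n.+1 ->
  is_lie_bracket br ->
  is_lie_grading br Lg ->
  (forall x : L, Lg 0 x -> x = 0) ->
  (forall d1 d2 d3 : 'I_n.+1, minus1_independent [:: d1; d2; d3] ->
     forall x1 x2 x3 x : L, Lg d1 x1 -> Lg d2 x2 -> Lg d3 x3 ->
       br (br x1 x2) (br x3 x) = 0) ->
  metabelian br.
Proof.
move=> om [lin1 lin2 alt jac] [sub dec ind gr] L0 hyp.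
have br0l : forall z, br 0 z = 0.
  by move=> z; have := lin1 (-1) 0 0 z; rewrite scaler0 addr0 scaleN1r addNr.
have br0r : forall z, br z 0 = 0.
  by move=> z; have := lin2 (-1) 0 0 z; rewrite scaler0 addr0 scaleN1r addNr.
have brDl : forall x y z, br (x + y) z = br x z + br y z.
  by move=> x y z; have := lin1 1 x y z; rewrite !scale1r.
have brDr : forall x y z, br z (x + y) = br z x + br z y.
  by move=> x y z; have := lin2 1 x y z; rewrite !scale1r.
have brZl : forall a x z, br (a *: x) z = a *: br x z.
  by move=> a x z; have := lin1 a x 0 z; rewrite !addr0 br0l addr0.
have brZr : forall a x z, br z (a *: x) = a *: br z x.
  by move=> a x z; have := lin2 a x 0 z; rewrite !addr0 br0r addr0.
have anti : forall x y, br x y = - br y x.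
  move=> x y; have := alt (x + y); rewrite brDl !brDr !alt add0r addr0 => /eqP.
  by rewrite addr_eq0 => /eqP.
have brNr : forall x y, br x (- y) = - br x y.
  by move=> x y; rewrite -scaleN1r brZr scaleN1r.
have Z0 : forall i x, i = 0 -> Lg i x -> x = 0.
  by move=> i x ->; exact: L0.
have KK : forall a b c xa xb xc, Lg a xa -> Lg b xb -> Lg c xc ->
    (a + b + c = 0 \/ (b + c = 0 /\ a + c = 0)) -> br (br xa xb) xc = 0.
  move=> a b c xa xb xc ha hb hc [e|[e1 e2]].
    exact: (Z0 _ _ e (gr _ _ _ _ (gr _ _ _ _ ha hb) hc)).
  have h1 : br xb xc = 0 := Z0 _ _ e1 (gr _ _ _ _ hb hc).
  have h2 : br xc xa = 0.
    by apply: (Z0 (c + a)); [rewrite addrC | exact: gr].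
  have := jac xa xb xc; rewrite h1 h2 !br0r !add0r => h.
  by rewrite anti h oppr0.
have JJ : forall a b c d xa xb xc xd, Lg a xa -> Lg b xb -> Lg c xc -> Lg d xd ->
    (a + b + c = 0 \/ (b + c = 0 /\ a + c = 0)) ->
    (a + b + d = 0 \/ (b + d = 0 /\ a + d = 0)) ->
    br (br xa xb) (br xc xd) = 0.
  move=> a b c d xa xb xc xd ha hb hc hd e1 e2.
  have hC := KK _ _ _ _ _ _ ha hb hc e1.
  have hD := KK _ _ _ _ _ _ ha hb hd e2.
  have := jac (br xa xb) xc xd.
  by rewrite (anti xd (br xa xb)) hD oppr0 br0r hC br0r !addr0.
have H4 : forall a b c d xa xb xc xd, Lg a xa -> Lg b xb -> Lg c xc -> Lg d xd ->
    br (br xa xb) (br xc xd) = 0.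
  move=> a b c d xa xb xc xd ha hb hc hd.
  case: (boolP (n.+1 %| a)%N) => [|na]; first by rewrite -o0 => /eqP e; rewrite (Z0 _ _ e ha) !br0l.
  case: (boolP (n.+1 %| b)%N) => [|nb]; first by rewrite -o0 => /eqP e; rewrite (Z0 _ _ e hb) br0r br0l.
  case: (boolP (n.+1 %| c)%N) => [|nc]; first by rewrite -o0 => /eqP e; rewrite (Z0 _ _ e hc) br0l br0r.
  case: (boolP (n.+1 %| d)%N) => [|nd]; first by rewrite -o0 => /eqP e; rewrite (Z0 _ _ e hd) !br0r.
  case: (boolP (n.+1 %| a + b)%N) => [|nab].
    by rewrite -d2 => /eqP e; rewrite (Z0 _ _ e (gr _ _ _ _ ha hb)) br0l.
  case: (boolP (n.+1 %| c + d)%N) => [|ncd].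
    by rewrite -d2 => /eqP e; rewrite (Z0 _ _ e (gr _ _ _ _ hc hd)) br0r.
  case: (boolP (n.+1 %| a + b + c + d)%N) => [|ns].
    rewrite -d4 => /eqP e.
    exact: (Z0 _ _ e (gr _ _ _ _ (gr _ _ _ _ ha hb) (gr _ _ _ _ hc hd))).
  have := comb _ _ _ _ _ om na nb nc nd nab ncd ns.
  case/orP => [h|/orP [h|/orP [h|/orP [h|/orP [h|h]]]]].
  - have i1 := indep h. exact: (hyp a b c i1 xa xb xc xd ha hb hc).
  - by rewrite (anti xc xd) brNr (hyp a b d (indep h) xa xb xd xc ha hb hd) oppr0.
  - by rewrite anti (hyp c d a (indep h) xc xd xa xb hc hd ha) oppr0.
  - by rewrite anti (anti xa xb) brNr (hyp c d b (indep h) xc xd xb xa hc hd hb) !oppr0.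
  - by case: (Jc h) => h1 h2; exact: (JJ a b c d).
  - by rewrite anti; case: (Jc h) => h1 h2; rewrite (JJ c d a b _ _ _ _ hc hd ha hb h1 h2) oppr0.
have All : forall p q p' q', br (br p q) (br p' q') = 0.
  move=> p q p' q'.
  case: (dec p) => f [hf ->]; case: (dec q) => g [hg ->].
  case: (dec p') => f' [hf' ->]; case: (dec q') => g' [hg' ->].
  set W := br _ (\sum_(i < n.+1) g' i).
  apply: (big_ind (fun x => br (br x _) W = 0)).
  - by rewrite !br0l.
  - by move=> x y hx hy; rewrite brDl brDl hx hy addr0.
  move=> i _.
  apply: (big_ind (fun y => br (br (f i) y) W = 0)).
  - by rewrite br0r br0l.
  - by move=> x y hx hy; rewrite brDr brDl hx hy addr0.
  move=> j _; rewrite /W.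
  apply: (big_ind (fun x => br (br (f i) (g j)) (br x _) = 0)).
  - by rewrite br0l br0r.
  - by move=> x y hx hy; rewrite brDl brDr hx hy addr0.
  move=> k _.
  apply: (big_ind (fun y => br (br (f i) (g j)) (br (f' k) y) = 0)).
  - by rewrite !br0r.
  - by move=> x y hx hy; rewrite brDr brDr hx hy addr0.
  move=> l _; exact: H4.
move=> u v [s ->] [t ->].
apply: (big_ind (fun x => br x _ = 0)).
- by rewrite br0l.
- by move=> x y hx hy; rewrite brDl hx hy addr0.
move=> i _; rewrite brZl.
have -> : br (br i.2.1 i.2.2) (\sum_(p <- t) p.1 *: br p.2.1 p.2.2) = 0; last by rewrite scaler0.
apply: (big_ind (fun y => br _ y = 0)).
- by rewrite br0r.
- by move=> x y hx hy; rewrite brDr hx hy addr0.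
by move=> j _; rewrite brZr All scaler0.
Qed.
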